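(* Let $m\ge 2$ and let $\mathcal{A}=\{\mathbf{A}^{(1)},\ldots,\mathbf{A}^{(m)}\}$ be POVMs on $\mathbb{C}^d$. Define $t_{\mathrm{PI}}=\max_{1\le l<l'\le m}\max\{t\in[0,1]:\{\Phi_t(\mathbf{A}^{(l)}),\Phi_t(\mathbf{A}^{(l')})\}\text{ is jointly measurable}\}$ and $t_{(m-1)\text{-POVM}}=\max\{t\in[0,1]:\Phi_t(\mathcal{A})\text{ is }\mathcal{B}\text{-simulable for some set }\mathcal{B}\text{ of at most }m-1\text{ POVMs on }\mathbb{C}^d\}$. Then $t_{\mathrm{PI}}\le t_{(m-1)\text{-POVM}}$.
   Context: A POVM on $\mathbb{C}^d$ with $n$ outcomes is a tuple $\mathbf{A}=(A_1,\ldots,A_n)$ of positive semidefinite operators with $\sum_a A_a=\mathbb{I}$. Given a set $\mathcal{B}=\{\mathbf{B}^{(j)}\}_j$ of POVMs, a POVM $\mathbf{A}$ with $n$ outcomes is $\mathcal{B}$-simulable if there are a probability distribution $p(j)$ over elements of $\mathcal{B}$ and conditional probability distributions $q(i|j,i')$ such that $A_i=\sum_j p(j)\sum_{i'}q(i|j,i')B^{(j)}_{i'}$ for all $i$; a set of POVMs is $\mathcal{B}$-simulable if each element is (distributions may depend on the element). The depolarising map is $\Phi_t(A)=tA+(1-t)\mathrm{Tr}(A)\mathbb{I}/d$, applied effectwise to POVMs and elementwise to sets. A pair $\{\mathbf{A},\mathbf{A}'\}$ is jointly measurable if there is a POVM $(M_{ab})$ with $\sum_b M_{ab}=A_a$,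 $\sum_a M_{ab}=A'_b$. *)

(* Defs.v *)
(* Scalars: an arbitrary numClosedFieldType C (e.g. algC),
   playing the role of the complex numbers; conjugation is conjC. *)
From HB Require Import structures.
From mathcomp Require Import all_boot all_order all_algebra.
From mathcomp Require Import sesquilinear spectral.
Set Implicit Arguments. Unset Strict Implicit. Unset Printing Implicit Defensive.
Import Order.TTheory GRing.Theory Num.Theory.
Local Open Scope ring_scope.
Local Open Scope sesquilinear_scope.

Section Defs.
Variable C : numClosedFieldType.
Variable d : nat.

Definition psd (A : 'M[C]_d) : Prop :=
  A ^t* = A /\ forall v : 'rV[C]_d, 0 <= (v *m A *m v ^t*) 0 0.

Definition is_povm (n : nat) (A : 'I_n -> 'M[C]_d) : Prop :=
  (forall a, psd (A a)) /\ \sum_(a < n) A a = 1%:M.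

Definition depol (t : C) (X : 'M[C]_d) : 'M[C]_d :=
  t *: X + ((1 - t) * \tr X / d%:R) *: 1%:M.

Definition depol_povm (t : C) (n : nat) (A : 'I_n -> 'M[C]_d) : 'I_n -> 'M[C]_d :=
  fun a => depol t (A a).

Definition jointly_measurable (n1 n2 : nat)
    (A : 'I_n1 -> 'M[C]_d) (A' : 'I_n2 -> 'M[C]_d) : Prop :=
  exists M : 'I_n1 -> 'I_n2 -> 'M[C]_d,
    (forall a b, psd (M a b)) /\
    (forall a, \sum_(b < n2) M a b = A a) /\
    (forall b, \sum_(a < n1) M a b = A' b).

Definition simulable (k : nat) (nb : 'I_k -> nat)
    (B : forall j : 'I_k, 'I_(nb j) -> 'M[C]_d)
    (n : nat) (A : 'I_n -> 'M[C]_d) : Prop :=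
  exists (p : 'I_k -> C) (q : forall j : 'I_k, 'I_n -> 'I_(nb j) -> C),
    (forall j, 0 <= p j) /\ \sum_(j < k) p j = 1 /\
    (forall j i i', 0 <= q j i i') /\
    (forall j i', \sum_(i < n) q j i i' = 1) /\
    (forall i, A i = \sum_(j < k) p j *: \sum_(i' < nb j) q j i i' *: B j i').

End Defs.

(* Main.v *)
Require Import Defs.
From HB Require Import structures.
From mathcomp Require Import all_boot all_order all_algebra.
From mathcomp Require Import sesquilinear spectral.
Import Order.TTheory GRing.Theory Num.Theory.
Local Open Scope ring_scope.
Local Open Scope sesquilinear_scope.

Section H.
Variable C : numClosedFieldType.
Variable d : nat.

Lemma psd0 : psd (0 : 'M[C]_d).
Proof. split; first by rewrite linear0 map_mx0. by move=> v; rewrite mulmx0 mul0mx mxE. Qed.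

Lemma psd_scale (c : C) (X : 'M[C]_d) : 0 <= c -> psd X -> psd (c *: X).
Proof.
move=> c0 [h p]; split.
  rewrite linearZ /= map_mxZ h.
by rewrite [in LHS]/= geC0_conj.
by move=> v; rewrite -scalemxAr -scalemxAl mxE mulr_ge0.
Qed.

Lemma psdD (X Y : 'M[C]_d) : psd X -> psd Y -> psd (X + Y).
Proof.
move=> [h p] [h' p']; split.
  by rewrite linearD /= map_mxD h h'.
by move=> v; rewrite mulmxDr mulmxDl mxE addr_ge0.
Qed.

Lemma psd1 : psd (1%:M : 'M[C]_d).
Proof.
split; first by rewrite trmx1 map_mx1.
move=> v; rewrite mulmx1 mxE; apply: sumr_ge0 => k _.
by rewrite !mxE -normCK exprn_ge0.
Qed.

Lemma psd_tr (X : 'M[C]_d) : psd X -> 0 <= \tr X.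
Proof.
move=> [_ p]; rewrite /mxtrace; apply: sumr_ge0 => i _.
have := p (delta_mx 0 i).
rewrite -rowE mxE (bigD1 i) //= big1 ?addr0; last first.
  by move=> k /negbTE ki; rewrite !mxE ki andbF conjC0 mulr0.
by rewrite !mxE !eqxx conjC1 mulr1.
Qed.

Lemma psd_depol (t : C) (X : 'M[C]_d) : 0 <= t <= 1 -> psd X -> psd (depol t X).
Proof.
move=> /andP[t0 t1] pX; apply: psdD; first exact: psd_scale.
apply: psd_scale; last exact: psd1.
by rewrite mulr_ge0 ?invr_ge0 ?ler0n // mulr_ge0 ?subr_ge0 // psd_tr.
Qed.

Lemma sum_depol (t : C) n (A : 'I_n -> 'M[C]_d) : (0 < d)%N -> is_povm A ->
  \sum_a depol_povm t A a = 1%:M.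
Proof.
move=> d0 [_ s]; rewrite /depol_povm /depol big_split /= -scaler_sumr s.
rewrite -scaler_suml -mulr_suml -mulr_sumr -raddf_sum /= s mxtrace1.
rewrite -mulrA mulfV ?mulr1 ?pnatr_eq0 -?lt0n //.
by rewrite -scalerDl addrC subrK scale1r.
Qed.

Lemma povm_ne n (A : 'I_n -> 'M[C]_d) : (0 < d)%N -> is_povm A -> exists i : 'I_n, True.
Proof.
move=> d0 [_ s]; case: n A s => [|n] A s; last by exists ord0.
move/matrixP: s => /(_ (Ordinal d0) (Ordinal d0)).
by rewrite big_ord0 !mxE eqxx => /eqP; rewrite eq_sym oner_eq0.
Qed.
Lemma sum_ind (T : finType) (a : T) : \sum_(i : T) ((i == a)%:R : C) = 1.
Proof. by rewrite (bigD1 a) //= eqxx big1 ?addr0 // => i /negbTE ->. Qed.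

Lemma sum_pairE (T1 T2 : finType) (F : T1 -> T2 -> 'M[C]_d) :
  \sum_(x < #|{: T1 * T2}|) F (enum_val x).1 (enum_val x).2 = \sum_(a : T1) \sum_(b : T2) F a b.
Proof. rewrite pair_big /=. rewrite (big_enum_val (A := {: T1 * T2}) (fun p => F p.1 p.2)). by []. Qed.
End H.
Arguments povm_ne {C d n A}.
Arguments sum_pairE {C d T1 T2}.

Theorem mainTheorem11 (C : numClosedFieldType) (d m : nat)
    (hd : (0 < d)%N) (hm : (2 <= m)%N)
    (n : 'I_m -> nat) (A : forall l : 'I_m, 'I_(n l) -> 'M[C]_d)
    (hA : forall l, is_povm (A l)) :
  forall (t : C) (l l' : 'I_m),
    0 <= t <= 1 -> (l < l')%N ->
    jointly_measurable (depol_povm t (A l)) (depol_povm t (A l')) ->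
  exists t' : C,
    [/\ t <= t', 0 <= t' <= 1 &
      exists (k : nat) (nb : 'I_k -> nat)
             (B : forall j : 'I_k, 'I_(nb j) -> 'M[C]_d),
        (k <= m - 1)%N /\ (forall j, is_povm (B j)) /\
        (forall l0 : 'I_m, simulable B (depol_povm t' (A l0)))].
Proof.
move=> t l l' t01 ll' [M [Mpsd [Mr Mc]]].
have [j0 El'] : exists j0 : 'I_m.-1, l' = lift l j0.
  case: (unliftP l l') => [j ->|E]; first by exists j.
  by move: ll'; rewrite E ltnn.
subst l'.
have [a0 _] := povm_ne hd (hA l).
pose U := fun j : 'I_m.-1 => 'I_(n l) -> 'I_(n (lift l j)) -> 'M[C]_d.
pose P := fun (j : 'I_m.-1) (N : U j) => (forall a b, psd (N a b)) /\
     (forall b, \sum_a N a b = depol_povm t (A (lift l j)) b) /\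
     (j = j0 -> forall a, \sum_b N a b = depol_povm t (A l) a).
have [N HN] : exists N : forall j, U j, forall j, P j (N j).
  apply: fin_all_exists => j; rewrite /P /U; case: (eqVneq j j0) => [->|ne].
    by exists M; split.
  exists (fun a b => (a == a0)%:R *: depol_povm t (A (lift l j)) b); split; [|split].
  - move=> a b; case: (a == a0).
      by rewrite scale1r; apply: psd_depol => //; exact: (hA _).1.
    by rewrite scale0r; exact: psd0.
  - move=> b; rewrite (bigD1 a0) //= eqxx scale1r big1 ?addr0 // => a /negbTE ->.
    exact: scale0r.
  - by move=> E; rewrite E eqxx in ne.
exists t; split => //.
exists m.-1, (fun j => #|{: 'I_(n l) * 'I_(n (lift l j))}|),
  (fun j x => N j (enum_val x).1 (enum_val x).2).
split; first by rewrite subn1.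
split.
  move=> j; have [Np [Nc _]] := HN j; split; first by move=> x; apply: Np.
  rewrite sum_pairE exchange_big /=.
  under eq_bigr do rewrite Nc.
  exact: sum_depol.
move=> l0; case: (unliftP l l0) => [j1 ->|->].
  have [i0 _] := povm_ne hd (hA (lift l j1)).
  exists (fun j => (j == j1)%:R),
    (fun j i x => if j == j1 then (val i == val (enum_val x).2)%:R else (i == i0)%:R).
  split; first by move=> j; rewrite ler0n.
  split; first by rewrite sum_ind.
  split; first by move=> j i x; case: ifP => _; rewrite ler0n.
  split.
    move=> j x; case: (eqVneq j j1) => [E|_]; last exact: sum_ind.
    subst j1; under eq_bigr do rewrite val_eqE.
    exact: sum_ind.
  move=> i; rewrite (bigD1 j1) //= [X in _ + X]big1 ?addr0; last first.
    by move=> j /negbTE ->; rewrite scale0r.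
  rewrite eqxx scale1r.
  rewrite (sum_pairE (fun a b => (val i == val b)%:R *: N j1 a b)).
  rewrite exchange_big (bigD1 i) //= [X in _ + X]big1 ?addr0 => [|b ne].
    by under eq_bigr do rewrite eqxx scale1r; rewrite (HN j1).2.1.
  apply: big1 => a _; have ->: (val i == val b) = false by rewrite val_eqE eq_sym (negbTE ne).
  by rewrite scale0r.
exists (fun j => (j == j0)%:R), (fun j i x => (i == (enum_val x).1)%:R).
split; first by move=> j; rewrite ler0n.
split; first by rewrite sum_ind.
split; first by move=> j i x; rewrite ler0n.
split; first by move=> j x; exact: sum_ind.
move=> i; rewrite (bigD1 j0) //= [X in _ + X]big1 ?addr0; last first.
  by move=> j /negbTE ->; rewrite scale0r.
rewrite eqxx scale1r.
rewrite (sum_pairE (fun a b => (i == a)%:R *: N j0 a b)).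
rewrite (bigD1 i) //= [X in _ + X]big1 ?addr0 => [|a ne].
  by under eq_bigr do rewrite eqxx scale1r; rewrite (HN j0).2.2.
by apply: big1 => b _; rewrite eq_sym (negbTE ne) scale0r.
Qed.
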